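(* For every $x\ge0$, $$J_0(\sqrt2x)-2J_0(x)+1=\frac{2}{\pi}\int_0^{\pi/2}\bigl(1-\cos(x\cos t)\bigr)\bigl(1-\cos(x\sin t)\bigr)\,dt.$$ In particular $J_0(\sqrt2x)-2J_0(x)+1\ge0$ for all $x\ge0$. Consequently, for all $r,\theta_2,\sigma>0$, $\alpha\in(0,2)$, $b\in(0,1/2)$ and $\kappa,\eta\in\mathbb R$, the quantity $$g_{r,\alpha}(\vartheta)=\frac{\sigma^2\psi_{r,\alpha}(\theta_2)}{(1-2b)^2}\int_b^{1-b}\!\int_b^{1-b}e^{-\kappa y-\eta z}\,dy\,dz$$ is strictly positive.
   Context: $J_0$ denotes the Bessel function of the first kind of order $0$, i.e. $J_0(x)=\frac{2}{\pi}\int_0^{\pi/2}\cos(x\cos t)\,dt$. For $r,\alpha,\theta_2>0$, $$\psi_{r,\alpha}(\theta_2)=\frac{2}{\theta_2\pi}\int_0^\infty\frac{1-e^{-x^2}}{x^{1+2\alpha}}\Bigl(J_0\bigl(\tfrac{\sqrt2rx}{\sqrt{\theta_2}}\bigr)-2J_0\bigl(\tfrac{rx}{\sqrt{\theta_2}}\bigr)+1\Bigr)dx,$$ and $\vartheta=(\kappa,\eta,\theta_2,\sigma^2)$. *)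

(* Defs.v *)
From Stdlib Require Import Reals.
From Coquelicot Require Import Coquelicot.
Open Scope R_scope.

Definition J0 (x : R) : R :=
  2 / PI * RInt (fun t => cos (x * cos t)) 0 (PI / 2).

Definition psi (r alpha theta2 : R) : R :=
  2 / (theta2 * PI) *
  RInt_gen (fun x => (1 - exp (- x ^ 2)) / Rpower x (1 + 2 * alpha) *
                     (J0 (sqrt 2 * r * x / sqrt theta2)
                      - 2 * J0 (r * x / sqrt theta2) + 1))
           (at_right 0) (Rbar_locally p_infty).

(* g_{r,alpha}(vartheta), vartheta = (kappa, eta, theta2, sigma^2) *)
Definition g (r alpha b kappa eta theta2 sigma : R) : R :=
  sigma ^ 2 * psi r alpha theta2 / (1 - 2 * b) ^ 2 *
  RInt (fun z => RInt (fun y => exp (- kappa * y - eta * z)) b (1 - b)) b (1 - b).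

(* Main.v *)
Require Import Defs.
From Stdlib Require Import Reals.
From Coquelicot Require Import Coquelicot.
From Stdlib Require Import Lra FunctionalExtensionality.
Open Scope R_scope.

Lemma dcont (f : R -> R) x : ex_derive f x -> continuous f x.
Proof. apply (ex_derive_continuous (K:=R_AbsRing) (V:=R_NormedModule)). Qed.

Lemma exc (f : R -> R) a b : (forall x, continuous f x) -> ex_RInt f a b.
Proof. intros H; apply (ex_RInt_continuous (V:=R_CompleteNormedModule)); intros; apply H. Qed.

Lemma RInt_shift (f : R -> R) c a b : (forall x, continuous f x) ->
  RInt (fun t => f (t + c)) a b = RInt f (a + c) (b + c).
Proof.
  intros H.
  replace (a + c) with (1 * a + c) by ring. replace (b + c) with (1 * b + c) by ring.
  rewrite <- RInt_comp_lin by (apply exc; auto).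
  apply RInt_ext; intros; unfold scal; simpl; unfold mult; simpl; rewrite Rmult_1_l; f_equal; ring.
Qed.

Lemma RInt_refl (f : R -> R) c a b : (forall x, continuous f x) ->
  RInt (fun t => f (c - t)) a b = RInt f (c - b) (c - a).
Proof.
  intros H.
  assert (E := RInt_comp_lin f (-1) c a b (exc _ _ _ H)).
  replace (-1 * a + c) with (c - a) in E by ring.
  replace (-1 * b + c) with (c - b) in E by ring.
  rewrite <- (opp_RInt_swap f) by (apply exc; auto).
  rewrite <- E.
  rewrite <- RInt_opp.
  2:{ apply (ex_RInt_continuous (V:=R_CompleteNormedModule)); intros.
      apply (continuous_scal_r (-1) (fun y : R => f (-1 * y + c))).
      apply (continuous_comp (fun y : R => -1 * y + c) f).
      apply (ex_derive_continuous (fun y : R => -1 * y + c)); auto_derive; auto.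
      apply H. }
  apply RInt_ext; intros. unfold scal; simpl; unfold mult; simpl. unfold opp; simpl.
  replace (-1 * x + c) with (c - x) by ring. ring.
Qed.

Lemma cont_cc y : forall x, continuous (fun t => cos (y * cos t)) x.
Proof. intros; apply dcont; auto_derive; auto. Qed.

Lemma lin (F1 F2 F3 F4 : R -> R) a b :
  (forall x, continuous F1 x) -> (forall x, continuous F2 x) ->
  (forall x, continuous F3 x) -> (forall x, continuous F4 x) ->
  RInt (fun t => 1 - F1 t - F2 t + (F3 t + F4 t) / 2) a b =
  (b - a) - RInt F1 a b - RInt F2 a b + (RInt F3 a b + RInt F4 a b) / 2.
Proof.
  intros H1 H2 H3 H4.
  apply is_RInt_unique.
  assert (I1 := RInt_correct F1 a b (exc _ _ _ H1)).
  assert (I2 := RInt_correct F2 a b (exc _ _ _ H2)).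
  assert (I3 := RInt_correct F3 a b (exc _ _ _ H3)).
  assert (I4 := RInt_correct F4 a b (exc _ _ _ H4)).
  assert (K := is_RInt_plus _ _ _ _ _ _
    (is_RInt_minus _ _ _ _ _ _ (is_RInt_minus _ _ _ _ _ _ (is_RInt_const a b 1) I1) I2)
    (is_RInt_scal _ _ _ (/2) _ (is_RInt_plus _ _ _ _ _ _ I3 I4))).
  eapply is_RInt_ext in K.
  2:{ intros; unfold plus, minus, scal, opp; simpl; unfold mult, plus, opp; simpl. reflexivity. }
  revert K; unfold plus, minus, scal, opp; simpl; unfold mult, plus, opp; simpl.
  intro K. replace ((b - a) - RInt F1 a b - RInt F2 a b + (RInt F3 a b + RInt F4 a b) / 2)
    with ((b - a) * 1 + - RInt F1 a b + - RInt F2 a b + / 2 * (RInt F3 a b + RInt F4 a b)) by (field).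
  eapply is_RInt_ext; [|exact K]. intros; simpl; field.
Qed.

Definition A y := RInt (fun t => cos (y * cos t)) 0 (PI / 2).

Lemma LB x : RInt (fun t => cos (x * sin t)) 0 (PI / 2) = A x.
Proof.
  unfold A.
  rewrite <- (RInt_ext (fun t => cos (x * cos (PI/2 - t)))).
  2:{ intros; rewrite cos_shift; auto. }
  rewrite (RInt_refl (fun t => cos (x * cos t))) by apply cont_cc.
  f_equal; ring.
Qed.

Lemma Leven y : RInt (fun t => cos (y * cos t)) (- (PI/4)) 0 = RInt (fun t => cos (y * cos t)) 0 (PI/4).
Proof.
  rewrite <- (RInt_ext (fun t => cos (y * cos (0 - t))) _ 0 (PI/4)).
  2:{ intros; rewrite Rminus_0_l, cos_neg; auto. }
  rewrite (RInt_refl (fun t => cos (y * cos t))) by apply cont_cc.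
  f_equal; ring.
Qed.

Lemma Lsym y : RInt (fun t => cos (y * cos t)) (PI/2) (3 * (PI/4)) = RInt (fun t => cos (y * cos t)) (PI/4) (PI/2).
Proof.
  rewrite <- (RInt_ext (fun t => cos (y * cos (PI - t))) _ (PI/4) (PI/2)).
  2:{ intros; rewrite Rtrigo_facts.cos_pi_minus.
      replace (y * - cos x) with (- (y * cos x)) by ring. rewrite cos_neg; auto. }
  rewrite (RInt_refl (fun t => cos (y * cos t))) by apply cont_cc.
  f_equal; field.
Qed.

Lemma s2ne : sqrt 2 <> 0.
Proof. apply Rgt_not_eq, sqrt_lt_R0; lra. Qed.

Lemma LC1 x : RInt (fun t => cos (x * cos t + x * sin t)) 0 (PI / 2) =
  RInt (fun t => cos (sqrt 2 * x * cos t)) (- (PI/4)) (PI/4).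
Proof.
  rewrite <- (RInt_ext (fun t => cos (sqrt 2 * x * cos (t + - (PI/4))))).
  2:{ intros t _. f_equal. replace (t + - (PI/4)) with (t - PI/4) by ring.
      rewrite cos_minus, cos_PI4, sin_PI4. field. apply s2ne. }
  rewrite (RInt_shift (fun t => cos (sqrt 2 * x * cos t))) by apply cont_cc.
  f_equal; field.
Qed.

Lemma LC2 x : RInt (fun t => cos (x * cos t - x * sin t)) 0 (PI / 2) =
  RInt (fun t => cos (sqrt 2 * x * cos t)) (PI/4) (3 * (PI/4)).
Proof.
  rewrite <- (RInt_ext (fun t => cos (sqrt 2 * x * cos (t + PI/4)))).
  2:{ intros t _. f_equal.
      rewrite cos_plus, cos_PI4, sin_PI4. field. apply s2ne. }
  rewrite (RInt_shift (fun t => cos (sqrt 2 * x * cos t))) by apply cont_cc.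
  f_equal; field.
Qed.


Lemma Lsum y : RInt (fun t => cos (y * cos t)) (- (PI/4)) (PI/4) +
  RInt (fun t => cos (y * cos t)) (PI/4) (3 * (PI/4)) = 2 * A y.
Proof.
  unfold A. set (g := fun t => cos (y * cos t)).
  assert (E : forall a b c, RInt g a b + RInt g b c = RInt g a c).
  { intros; apply (RInt_Chasles g); apply exc, cont_cc. }
  rewrite <- (E _ 0), <- (E (PI/4) (PI/2)). unfold g; rewrite Leven, Lsym. fold g.
  rewrite <- (E 0 (PI/4) (PI/2)). ring.
Qed.

Lemma prodexp a b : (1 - cos a) * (1 - cos b) = 1 - cos a - cos b + (cos (a + b) + cos (a - b)) / 2.
Proof. rewrite cos_plus, cos_minus. field. Qed.

Theorem part1 x :
  J0 (sqrt 2 * x) - 2 * J0 x + 1 =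
  2 / PI * RInt (fun t => (1 - cos (x * cos t)) * (1 - cos (x * sin t))) 0 (PI / 2).
Proof.
  rewrite (RInt_ext (fun t => (1 - cos (x * cos t)) * (1 - cos (x * sin t))) (fun t => 1 - cos (x * cos t) - cos (x * sin t) +
     (cos (x * cos t + x * sin t) + cos (x * cos t - x * sin t)) / 2) 0 (PI/2)).
  2:{ intros t _. apply prodexp. }
  rewrite (lin (fun t => cos (x * cos t)) (fun t => cos (x * sin t))
     (fun t => cos (x * cos t + x * sin t)) (fun t => cos (x * cos t - x * sin t)));
   try (intros; apply dcont; auto_derive; auto).
  rewrite LB, LC1, LC2, Lsum. unfold J0. fold (A x). fold (A (sqrt 2 * x)).
  field. apply PI_neq0.
Qed.

Lemma cos_lip a b : Rabs (cos a - cos b) <= Rabs (a - b).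
Proof.
  destruct (MVT_abs cos (fun x => - sin x) b a) as [c [Hc _]].
  { intros; apply derivable_pt_lim_cos. }
  rewrite Hc. rewrite Rabs_Ropp.
  assert (Rabs (sin c) <= 1) by (apply Rabs_le; apply SIN_bound).
  assert (0 <= Rabs (a - b)) by apply Rabs_pos. nra.
Qed.

Lemma sin_abs z : Rabs (sin z) <= Rabs z.
Proof.
  destruct (MVT_abs sin cos 0 z) as [c [Hc _]].
  { intros; apply derivable_pt_lim_sin. }
  rewrite sin_0, !Rminus_0_r in Hc. rewrite Hc.
  assert (Rabs (cos c) <= 1) by (apply Rabs_le; apply COS_bound).
  assert (0 <= Rabs z) by apply Rabs_pos. nra.
Qed.

Lemma omc u : 0 <= 1 - cos u <= u ^ 2 / 2.
Proof.
  split. { destruct (COS_bound u); lra. }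
  replace u with (2 * (u / 2)) at 1 by field. rewrite cos_2a_sin.
  assert (H := Rsqr_le_abs_1 _ _ (sin_abs (u / 2))). unfold Rsqr in H. nra.
Qed.

Lemma lip_cont (f : R -> R) L x : 0 <= L -> (forall u v, Rabs (f u - f v) <= L * Rabs (u - v)) ->
  continuous f x.
Proof.
  intros HL H. apply filterlim_locally. intros eps.
  assert (Hd : 0 < eps / (L + 1)) by (apply Rdiv_lt_0_compat; [apply cond_pos | lra]).
  exists (mkposreal _ Hd). intros y Hy.
  change (Rabs (f y - f x) < eps).
  change (Rabs (y - x) < eps / (L + 1)) in Hy.
  eapply Rle_lt_trans; [apply H|].
  assert (0 < eps) by apply cond_pos.
  apply Rle_lt_trans with (L * (eps / (L + 1))). apply Rmult_le_compat_l; lra.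
  apply Rmult_lt_reg_r with (L + 1). lra. field_simplify; nra.
Qed.

Lemma J0_lip u v : Rabs (J0 u - J0 v) <= 1 * Rabs (u - v).
Proof.
  unfold J0. rewrite <- Rmult_minus_distr_l.
  assert (E : RInt (fun t => cos (u * cos t)) 0 (PI / 2) - RInt (fun t => cos (v * cos t)) 0 (PI / 2)
    = RInt (fun t => cos (u * cos t) - cos (v * cos t)) 0 (PI / 2)).
  { symmetry. apply (RInt_minus (V:=R_CompleteNormedModule)); apply exc, cont_cc. }
  rewrite E. rewrite Rabs_mult.
  assert (HP := PI_RGT_0).
  rewrite (Rabs_right (2 / PI)) by (apply Rle_ge, Rlt_le, Rdiv_lt_0_compat; lra).
  assert (B : Rabs (RInt (fun t => cos (u * cos t) - cos (v * cos t)) 0 (PI / 2)) <= (PI / 2 - 0) * Rabs (u - v)).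
  { apply abs_RInt_le_const. lra.
    apply (ex_RInt_continuous (V:=R_CompleteNormedModule)); intros; apply dcont; auto_derive; auto.
    intros t _. eapply Rle_trans; [apply cos_lip|].
    replace (u * cos t - v * cos t) with ((u - v) * cos t) by ring.
    rewrite Rabs_mult. assert (Rabs (cos t) <= 1) by (apply Rabs_le; apply COS_bound).
    assert (0 <= Rabs (u - v)) by apply Rabs_pos. nra. }
  apply Rle_trans with (2 / PI * ((PI / 2 - 0) * Rabs (u - v))).
  apply Rmult_le_compat_l; [apply Rlt_le, Rdiv_lt_0_compat; lra | exact B].
  right. field. lra.
Qed.

Definition Hf y := J0 (sqrt 2 * y) - 2 * J0 y + 1.

Lemma Hf_lip u v : Rabs (Hf u - Hf v) <= (sqrt 2 + 2) * Rabs (u - v).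
Proof.
  unfold Hf.
  replace (J0 (sqrt 2 * u) - 2 * J0 u + 1 - (J0 (sqrt 2 * v) - 2 * J0 v + 1))
    with ((J0 (sqrt 2 * u) - J0 (sqrt 2 * v)) - 2 * (J0 u - J0 v)) by ring.
  eapply Rle_trans; [apply Rabs_triang|]. rewrite Rabs_Ropp, Rabs_mult.
  assert (A1 := J0_lip (sqrt 2 * u) (sqrt 2 * v)).
  assert (A2 := J0_lip u v).
  replace (sqrt 2 * u - sqrt 2 * v) with (sqrt 2 * (u - v)) in A1 by ring.
  rewrite Rabs_mult, (Rabs_right (sqrt 2)) in A1 by (apply Rle_ge, sqrt_pos).
  rewrite (Rabs_right 2) by lra.
  replace ((sqrt 2 + 2) * Rabs (u - v)) with (1 * (sqrt 2 * Rabs (u - v)) + 2 * (1 * Rabs (u - v))) by ring.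
  apply Rplus_le_compat; [exact A1|]. apply Rmult_le_compat_l; [lra|exact A2].
Qed.

Lemma Hf_int y : Hf y = 2 / PI * RInt (fun t => (1 - cos (y * cos t)) * (1 - cos (y * sin t))) 0 (PI / 2).
Proof. unfold Hf. exact (part1 y). Qed.

Lemma ex_h y : ex_RInt (fun t => (1 - cos (y * cos t)) * (1 - cos (y * sin t))) 0 (PI / 2).
Proof. apply exc; intros; apply dcont; auto_derive; auto. Qed.

Lemma sq_le1 c y : -1 <= c <= 1 -> (y * c) ^ 2 <= y ^ 2.
Proof. intros H. replace ((y*c)^2) with (y^2 * c^2) by ring.
  assert (h : 0 <= (1 - c) * (1 + c)) by (apply Rmult_le_pos; lra).
  assert (c^2 <= 1) by (replace (c^2) with (1 - (1 - c) * (1 + c)) by ring; lra).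
  assert (0 <= y^2) by (rewrite <- Rsqr_pow2; apply Rle_0_sqr).
  replace (y^2) with (y^2 * 1) at 2 by ring. apply Rmult_le_compat_l; auto. Qed.

Lemma prod_bd y t : 0 <= (1 - cos (y * cos t)) * (1 - cos (y * sin t)) <= Rmin 4 (y ^ 4 / 4).
Proof.
  destruct (omc (y * cos t)) as [a1 a2]. destruct (omc (y * sin t)) as [b1 b2].
  assert (c1 := sq_le1 _ y (COS_bound t)). assert (c2 := sq_le1 _ y (SIN_bound t)).
  assert (a3 : 1 - cos (y * cos t) <= 2) by (destruct (COS_bound (y * cos t)); lra).
  assert (b3 : 1 - cos (y * sin t) <= 2) by (destruct (COS_bound (y * sin t)); lra).
  split. apply Rmult_le_pos; auto. apply Rmin_glb.
  apply Rle_trans with (2 * 2). apply Rmult_le_compat; auto. lra.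
  apply Rle_trans with ((y ^ 2 / 2) * (y ^ 2 / 2)). apply Rmult_le_compat; lra.
  right; field.
Qed.

Lemma Hf_bounds y : 0 <= Hf y /\ Hf y <= 4 /\ Hf y <= y ^ 4 / 4.
Proof.
  rewrite Hf_int. assert (HP := PI_RGT_0).
  assert (P2 : 0 <= 2 / PI) by (apply Rlt_le, Rdiv_lt_0_compat; lra).
  assert (Hb : forall t, 0 <= (1 - cos (y * cos t)) * (1 - cos (y * sin t)) <= Rmin 4 (y ^ 4 / 4)).
  { intros t. apply prod_bd. }
  assert (I0 : 0 <= RInt (fun t => (1 - cos (y * cos t)) * (1 - cos (y * sin t))) 0 (PI / 2)).
  { apply RInt_ge_0. lra. apply ex_h. intros; apply Hb. }
  assert (I1 : RInt (fun t => (1 - cos (y * cos t)) * (1 - cos (y * sin t))) 0 (PI / 2) <= PI / 2 * Rmin 4 (y ^ 4 / 4)).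
  { eapply Rle_trans. apply RInt_le with (g := fun _ => Rmin 4 (y ^ 4 / 4)). lra. apply ex_h.
    apply ex_RInt_const. intros; apply Hb.
    rewrite RInt_const. unfold scal; simpl; unfold mult; simpl. lra. }
  assert (Rmin 4 (y^4/4) <= 4) by apply Rmin_l.
  assert (Rmin 4 (y^4/4) <= y^4/4) by apply Rmin_r.
  assert (E : 2 / PI * (PI / 2 * Rmin 4 (y ^ 4 / 4)) = Rmin 4 (y ^ 4 / 4)) by (field; lra).
  assert (2 / PI * RInt (fun t => (1 - cos (y * cos t)) * (1 - cos (y * sin t))) 0 (PI / 2) <= Rmin 4 (y ^ 4 / 4)).
  { rewrite <- E. apply Rmult_le_compat_l; auto. }
  split; [apply Rmult_le_pos; auto|]. split; lra.
Qed.

Lemma omc_pos u : 0 < u < PI -> 0 < 1 - cos u.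
Proof.
  intros H. replace u with (2 * (u / 2)) by field. rewrite cos_2a_sin.
  assert (0 < sin (u / 2)) by (apply sin_gt_0; lra). nra.
Qed.

Lemma Hf_pos y : 0 < y < 1 -> 0 < Hf y.
Proof.
  intros Hy. rewrite Hf_int. assert (HP := PI_RGT_0).
  apply Rmult_lt_0_compat. apply Rdiv_lt_0_compat; lra.
  apply RInt_gt_0. lra.
  - intros t Ht. assert (Hp1 := PI2_1).
    assert (0 < cos t) by (apply cos_gt_0; lra).
    assert (0 < sin t) by (apply sin_gt_0; lra).
    destruct (COS_bound t). destruct (SIN_bound t).
    apply Rmult_lt_0_compat; apply omc_pos; split; nra.
  - intros; apply dcont; auto_derive; auto.
Qed.

Lemma rp_der e x : 0 < x -> is_derive (fun y => Rpower y e) x (e * Rpower x (e - 1)).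
Proof. intros; apply is_derive_Reals, derivable_pt_lim_power; auto. Qed.

Lemma rp_cont c e x : 0 < x -> continuous (fun y => c * Rpower y e) x.
Proof.
  intros Hx. apply dcont. exists (c * (e * Rpower x (e - 1))).
  apply is_derive_Reals. apply (derivable_pt_lim_scal (fun y => Rpower y e)).
  apply derivable_pt_lim_power; auto.
Qed.

Lemma tail_int q M b : 0 < q -> 1 <= M <= b ->
  RInt (fun x => 4 * Rpower x (- q - 1)) M b <= 4 * Rpower M (- q) / q.
Proof.
  intros Hq HMb.
  assert (D : is_RInt (fun x => 4 * Rpower x (- q - 1)) M b
     (minus ((fun x => -4 / q * Rpower x (-q)) b) ((fun x => -4 / q * Rpower x (-q)) M))).
  { apply (is_RInt_derive (V:=R_CompleteNormedModule) (fun x => -4 / q * Rpower x (-q))).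
    - intros x Hx. rewrite Rmin_left in Hx by lra.
      replace (4 * Rpower x (- q - 1)) with (-4 / q * (- q * Rpower x (- q - 1))) by (field; lra).
      apply is_derive_Reals. apply (derivable_pt_lim_scal (fun y => Rpower y (-q))).
      apply derivable_pt_lim_power; lra.
    - intros x Hx. rewrite Rmin_left in Hx by lra. apply rp_cont; lra. }
  rewrite (is_RInt_unique _ _ _ _ D). unfold minus, plus, opp; simpl.
  assert (0 < Rpower b (-q)) by (unfold Rpower; apply exp_pos).
  assert (0 < 4 / q) by (apply Rdiv_lt_0_compat; lra).
  change (-4 / q * Rpower b (- q) + - (-4 / q * Rpower M (- q)) <= 4 * Rpower M (-q) / q).
  assert (0 < 4 / q * Rpower b (- q)) by (apply Rmult_lt_0_compat; auto).
  assert (E : 4 * Rpower M (-q) / q = 4 / q * Rpower M (- q)) by (field; lra).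
  rewrite E. lra.
Qed.

Lemma exf (f : R -> R) (Hc : forall x, 0 < x -> continuous f x) a b : 0 < a -> 0 < b -> ex_RInt f a b.
Proof.
  intros. apply (ex_RInt_continuous (V:=R_CompleteNormedModule)). intros z Hz.
  apply Hc. assert (0 < Rmin a b) by (apply Rmin_glb_lt; auto). lra.
Qed.

Lemma chas (f : R -> R) (Hc : forall x, 0 < x -> continuous f x) a b c : 0 < a -> 0 < b -> 0 < c -> RInt f a b + RInt f b c = RInt f a c.
Proof. intros; apply (RInt_Chasles (V:=R_CompleteNormedModule)); apply (exf f Hc); auto. Qed.

Lemma nonneg (f : R -> R) (Hc : forall x, 0 < x -> continuous f x) (H0 : forall x, 0 < x -> 0 <= f x) a b : 0 < a <= b -> 0 <= RInt f a b.
Proof. intros; apply RInt_ge_0; try lra. apply (exf f Hc); lra. intros; apply H0; lra. Qed.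

Lemma head (f : R -> R) (K : R) (HK : 0 <= K) (Hc : forall x, 0 < x -> continuous f x) (H0 : forall x, 0 < x -> 0 <= f x) (Hs : forall x, 0 < x <= 1 -> f x <= K) a d : 0 < a <= d -> d <= 1 -> RInt f a d <= K * d.
Proof.
  intros. eapply Rle_trans. apply RInt_le with (g := fun _ => K); try lra.
  apply (exf f Hc); lra. apply ex_RInt_const. intros; apply Hs; lra.
  rewrite RInt_const. unfold scal; simpl; unfold mult; simpl. nra.
Qed.

Lemma tail (f : R -> R) (q : R) (Hq : 0 < q) (Hc : forall x, 0 < x -> continuous f x) (Hb : forall x, 1 <= x -> f x <= 4 * Rpower x (- q - 1)) M b : 1 <= M <= b -> RInt f M b <= 4 * Rpower M (- q) / q.
Proof.
  intros. eapply Rle_trans; [|apply tail_int; auto].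
  apply RInt_le; try lra. apply (exf f Hc); lra.
  apply (ex_RInt_continuous (V:=R_CompleteNormedModule)). intros z Hz.
  rewrite Rmin_left in Hz by lra. apply rp_cont; lra.
  intros; apply Hb; lra.
  auto.
Qed.

Definition FF := filter_prod (at_right 0) (Rbar_locally p_infty).

Lemma FF_proper : ProperFilter FF.
Proof. exact (@filter_prod_proper _ _ _ _ (at_right_proper_filter 0) (Rbar_locally_filter p_infty)). Qed.

Lemma Ev d M : 0 < d -> FF (fun ab => 0 < fst ab < d /\ M < snd ab).
Proof.
  intros Hd. apply (Filter_prod _ _ _ (fun a => 0 < a < d) (fun b => M < b)).
  - exists (mkposreal d Hd). intros y Hy Hy0. change (Rabs (y - 0) < d) in Hy.
    rewrite Rminus_0_r in Hy. apply Rabs_def2 in Hy. simpl. lra.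
  - exists M; auto.
  - intros; simpl; auto.
Qed.

Definition I (f : R -> R) (ab : R * R) := RInt f (fst ab) (snd ab).

Lemma cauchyI (f : R -> R) (q K : R) (Hq : 0 < q) (HK : 0 <= K) (Hc : forall x, 0 < x -> continuous f x) (H0 : forall x, 0 < x -> 0 <= f x) (Hs : forall x, 0 < x <= 1 -> f x <= K) (Hb : forall x, 1 <= x -> f x <= 4 * Rpower x (- q - 1)) : forall eps : posreal, exists x, filtermap (I f) FF (ball x eps).
Proof.
  intros [eps He]. simpl.
  set (d := Rmin 1 (eps / (2 * (K + 1)))).
  assert (Hd0 : 0 < d) by (apply Rmin_glb_lt; [lra|apply Rdiv_lt_0_compat; lra]).
  assert (Hd1 : d <= 1) by apply Rmin_l.
  assert (Hd2 : K * d < eps / 2).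
  { assert (d <= eps / (2 * (K + 1))) by apply Rmin_r.
    apply Rle_lt_trans with (K * (eps / (2 * (K + 1)))). apply Rmult_le_compat_l; auto.
    apply Rmult_lt_reg_r with (2 * (K + 1)). lra. field_simplify; try lra; try nra. }
  set (k := Rmax 0 (- ln (eps * q / 8) / q) + 1).
  assert (Hk0 : 1 <= k) by (unfold k; assert (0 <= Rmax 0 (- ln (eps * q / 8) / q)) by apply Rmax_l; lra).
  set (M := exp k).
  assert (HM : 1 <= M) by (unfold M; assert (H := exp_ineq1_le k); lra).
  assert (HT : 4 * Rpower M (- q) / q < eps / 2).
  { unfold M, Rpower. rewrite ln_exp.
    assert (A : - ln (eps * q / 8) / q <= Rmax 0 (- ln (eps * q / 8) / q)) by apply Rmax_r.
    assert (B : - q * k < ln (eps * q / 8)).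
    { unfold k. assert (q * (- ln (eps * q / 8) / q) = - ln (eps * q / 8)) by (field; lra). nra. }
    apply exp_increasing in B. rewrite exp_ln in B by (apply Rmult_lt_0_compat; [nra|lra]).
    assert (0 < exp (- q * k)) by apply exp_pos.
    apply Rmult_lt_reg_r with q; auto. field_simplify; try lra; try nra. }
  exists (I f (d, M)). unfold filtermap.
  apply (filter_imp (F:=FF)) with (P := fun ab => 0 < fst ab < d /\ M < snd ab).
  2:{ apply Ev; auto. }
  intros [a b] [[Ha1 Ha2] Hb1]. simpl in *.
  change (Rabs (RInt f a b - RInt f d M) < eps).
  rewrite <- (chas f Hc a d b), <- (chas f Hc d M b) by lra.
  assert (0 <= RInt f a d) by (apply (nonneg f Hc H0); lra).
  assert (0 <= RInt f M b) by (apply (nonneg f Hc H0); lra).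
  assert (RInt f a d <= K * d) by (apply (head f K HK Hc H0 Hs); lra).
  assert (RInt f M b <= 4 * Rpower M (- q) / q) by (apply (tail f q Hq Hc Hb); lra).
  rewrite Rabs_right; lra.
Qed.


Lemma improper (f : R -> R) (q K : R) (Hq : 0 < q) (HK : 0 <= K) (Hc : forall x, 0 < x -> continuous f x) (H0 : forall x, 0 < x -> 0 <= f x) (Hs : forall x, 0 < x <= 1 -> f x <= K) (Hb : forall x, 1 <= x -> f x <= 4 * Rpower x (- q - 1)) (Hpos : exists a0 b0, 0 < a0 < b0 /\ 0 < RInt f a0 b0) : exists l, 0 < l /\ is_RInt_gen f (at_right 0) (Rbar_locally p_infty) l.
Proof.
  set (G := filtermap (I f) FF).
  assert (PG : ProperFilter' G).
  { apply Proper_StrongProper. apply filtermap_proper_filter. apply FF_proper. }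
  assert (C := R_complete_ax1 G PG (cauchyI f q K Hq HK Hc H0 Hs Hb)).
  set (l := R_complete_lim G) in C.
  assert (FPF := FF_proper).
  exists l. split.
  - destruct Hpos as [a0 [b0 [[Ha0 Hab] Hv]]].
    set (v := RInt f a0 b0) in Hv.
    assert (Hv2 : 0 < v / 2) by lra.
    assert (C1 : FF (fun ab => ball l (v / 2) (I f ab))) by exact (C (mkposreal _ Hv2)).
    assert (E := filter_and (F:=FF) _ _ C1 (Ev a0 b0 Ha0)).
    destruct (Rlt_or_le 0 l) as [Hl|Hl]; auto. exfalso.
    apply (filter_not_empty (F:=FF)).
    apply (filter_imp (F:=FF)) with (2 := E). intros [a b] [Hball [[Ha1 Ha2] Hb1]]. simpl in *.
    change (Rabs (RInt f a b - l) < v / 2) in Hball.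
    rewrite <- (chas f Hc a a0 b), <- (chas f Hc a0 b0 b) in Hball by lra.
    assert (0 <= RInt f a a0) by (apply (nonneg f Hc H0); lra).
    assert (0 <= RInt f b0 b) by (apply (nonneg f Hc H0); lra).
    fold v in Hball. apply Rabs_def2 in Hball. lra.
  - unfold is_RInt_gen, filterlimi, filter_le, filtermapi.
    intros P [eps HP].
    assert (C1 : FF (fun ab => ball l eps (I f ab))) by exact (C eps).
    apply (filter_imp (F:=FF)) with (2 := filter_and (F:=FF) _ _ C1 (Ev 1 1 Rlt_0_1)).
    intros [a b] [Hball [[Ha1 Ha2] Hb1]]. simpl in *.
    exists (RInt f a b). split.
    + apply (RInt_correct (V:=R_CompleteNormedModule)). apply (exf f Hc); lra.
    + apply HP. exact Hball.
Qed.


Lemma cmul (g h : R -> R) x : continuous g x -> continuous h x -> continuous (fun y => g y * h y) x.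
Proof. intros A B. apply (continuous_mult (U:=R_UniformSpace) (K:=R_AbsRing) g h x A B). Qed.

Lemma Hf_cont c x : 0 <= c -> continuous (fun y => Hf (c * y)) x.
Proof.
  intros Hc. apply lip_cont with ((sqrt 2 + 2) * c).
  apply Rmult_le_pos; auto. assert (0 <= sqrt 2) by apply sqrt_pos. lra.
  intros u v. eapply Rle_trans; [apply Hf_lip|].
  replace (c * u - c * v) with (c * (u - v)) by ring. rewrite Rabs_mult, (Rabs_right c) by lra.
  right; ring.
Qed.

Lemma E_cont e x : 0 < x -> continuous (fun y => (1 - exp (- y ^ 2)) * Rpower y e) x.
Proof. intros; apply dcont; auto_derive; auto. eexists; apply rp_der; auto. Qed.

Lemma Rpower_le1 x e : 0 < x <= 1 -> 0 <= e -> Rpower x e <= 1.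
Proof.
  intros Hx He. unfold Rpower. rewrite <- exp_0.
  assert (ln x <= 0) by (rewrite <- ln_1; apply ln_le; lra).
  destruct (Req_dec (e * ln x) 0) as [E|E]. rewrite E; lra.
  left; apply exp_increasing. nra.
Qed.

Lemma omexp x : 0 <= 1 - exp (- x ^ 2) <= Rmin 1 (x ^ 2).
Proof.
  assert (exp (- x ^ 2) <= 1).
  { rewrite <- exp_0. assert (h0 : - x ^ 2 <= 0) by (assert (0 <= x ^ 2) by (rewrite <- Rsqr_pow2; apply Rle_0_sqr); lra).
    destruct (Rle_lt_or_eq_dec _ _ h0) as [h|h]. left; apply exp_increasing; auto. rewrite h; right; reflexivity. }
  assert (H2 := exp_ineq1_le (- x ^ 2)). assert (0 < exp (- x ^ 2)) by apply exp_pos.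
  split. lra. apply Rmin_glb; lra.
Qed.

Lemma part3 r theta2 sigma alpha b kappa eta :
  0 < r -> 0 < theta2 -> 0 < sigma -> 0 < alpha < 2 -> 0 < b < 1 / 2 ->
  0 < g r alpha b kappa eta theta2 sigma.
Proof.
  intros Hr Ht Hs Ha Hb.
  set (c := r / sqrt theta2).
  assert (Hst : 0 < sqrt theta2) by (apply sqrt_lt_R0; auto).
  assert (Hc : 0 < c) by (apply Rdiv_lt_0_compat; auto).
  set (p := 1 + 2 * alpha).
  set (f := fun x => (1 - exp (- x ^ 2)) * Rpower x (- p) * Hf (c * x)).
  assert (Ef : (fun x => (1 - exp (- x ^ 2)) / Rpower x (1 + 2 * alpha) *
                     (J0 (sqrt 2 * r * x / sqrt theta2)
                      - 2 * J0 (r * x / sqrt theta2) + 1)) = f).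
  { apply functional_extensionality; intros x. unfold f, Hf, Rdiv at 1.
    rewrite Rpower_Ropp. fold p.
    replace (sqrt 2 * r * x / sqrt theta2) with (sqrt 2 * (c * x)) by (unfold c; field; lra).
    replace (r * x / sqrt theta2) with (c * x) by (unfold c; field; lra). reflexivity. }
  assert (Hq : 0 < 2 * alpha) by lra.
  assert (HK : 0 <= c ^ 4 / 4) by (assert (0 < c ^ 4) by (apply pow_lt; auto); lra).
  assert (Hcont : forall x, 0 < x -> continuous f x).
  { intros x Hx. unfold f. apply cmul. apply E_cont; auto. apply Hf_cont; lra. }
  assert (Hrp : forall x, 0 < Rpower x (- p)) by (intros; unfold Rpower; apply exp_pos).
  assert (H0 : forall x, 0 < x -> 0 <= f x).
  { intros x Hx. unfold f. destruct (omexp x). destruct (Hf_bounds (c * x)) as [? [? ?]].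
    apply Rmult_le_pos; auto. apply Rmult_le_pos; auto. left; auto. }
  assert (Hsm : forall x, 0 < x <= 1 -> f x <= c ^ 4 / 4).
  { intros x Hx. unfold f. destruct (omexp x) as [o1 o2]. destruct (Hf_bounds (c * x)) as [h1 [h2 h3]].
    assert (o3 : 1 - exp (- x ^ 2) <= x ^ 2) by (eapply Rle_trans; [exact o2|apply Rmin_r]).
    assert (R6 : x ^ 6 * Rpower x (- p) <= 1).
    { rewrite <- (Rpower_pow 6 x) by lra. rewrite <- Rpower_plus. apply Rpower_le1; auto.
      simpl INR. unfold p. lra. }
    apply Rle_trans with (x ^ 2 * Rpower x (- p) * ((c * x) ^ 4 / 4)).
    apply Rmult_le_compat; auto. apply Rmult_le_pos; auto. left; auto.
    apply Rmult_le_compat_r; auto. left; auto.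
    assert (Eq : x ^ 2 * Rpower x (- p) * ((c * x) ^ 4 / 4) = c ^ 4 / 4 * (x ^ 6 * Rpower x (- p))) by field. rewrite Eq.
    replace (c ^ 4 / 4) with (c ^ 4 / 4 * 1) at 2 by ring. apply Rmult_le_compat_l; auto. }
  assert (Hbig : forall x, 1 <= x -> f x <= 4 * Rpower x (- (2 * alpha) - 1)).
  { intros x Hx. unfold f. destruct (omexp x) as [o1 o2]. destruct (Hf_bounds (c * x)) as [h1 [h2 h3]].
    assert (o3 : 1 - exp (- x ^ 2) <= 1) by (eapply Rle_trans; [exact o2|apply Rmin_l]).
    replace (- (2 * alpha) - 1) with (- p) by (unfold p; ring).
    apply Rle_trans with (1 * Rpower x (- p) * 4).
    apply Rmult_le_compat; auto. apply Rmult_le_pos; auto. left; auto.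
    apply Rmult_le_compat_r; auto. left; auto. right; ring. }
  assert (Hpos : exists a0 b0, 0 < a0 < b0 /\ 0 < RInt f a0 b0).
  { exists (1 / (3 * c)), (1 / (2 * c)).
    assert (A1 : 0 < 1 / (3 * c)) by (apply Rdiv_lt_0_compat; lra).
    assert (A2 : 1 / (3 * c) < 1 / (2 * c)) by (apply Rmult_lt_reg_r with (6 * c); [lra| field_simplify; lra]).
    split. lra.
    apply RInt_gt_0; auto.
    - intros x Hx. unfold f.
      assert (Hcx : 0 < c * x < 1).
      { split. apply Rmult_lt_0_compat; lra.
        apply Rlt_trans with (c * (1 / (2 * c))). apply Rmult_lt_compat_l; lra.
        field_simplify; lra. }
      assert (exp (- x ^ 2) < 1).
      { rewrite <- exp_0. apply exp_increasing. assert (0 < x ^ 2) by (apply pow_lt; lra). lra. }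
      apply Rmult_lt_0_compat. apply Rmult_lt_0_compat; auto. lra. apply Hf_pos; auto.
    - intros x Hx. apply Hcont. lra. }
  destruct (improper f (2 * alpha) (c ^ 4 / 4) Hq HK Hcont H0 Hsm Hbig Hpos) as [l [Hl Hil]].
  unfold g, psi. rewrite Ef.
  rewrite (is_RInt_gen_unique f l Hil).
  set (C := RInt (fun y => exp (- kappa * y)) b (1 - b)).
  assert (HC : 0 < C).
  { apply RInt_gt_0. lra. intros; apply exp_pos. intros; apply dcont; auto_derive; auto. }
  assert (ED : RInt (fun z => RInt (fun y => exp (- kappa * y - eta * z)) b (1 - b)) b (1 - b)
            = RInt (fun z => exp (- eta * z) * C) b (1 - b)).
  { apply RInt_ext. intros z _. unfold C.
    rewrite <- (RInt_scal (V:=R_CompleteNormedModule)).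
    2:{ apply exc; intros; apply dcont; auto_derive; auto. }
    apply RInt_ext. intros y _. unfold scal; simpl; unfold mult; simpl.
    replace (- kappa * y - eta * z) with (- eta * z + - kappa * y) by ring.
    rewrite exp_plus; reflexivity. }
  rewrite ED.
  assert (HD : 0 < RInt (fun z => exp (- eta * z) * C) b (1 - b)).
  { apply RInt_gt_0. lra. intros; apply Rmult_lt_0_compat; auto; apply exp_pos.
    intros; apply dcont; auto_derive; auto. }
  assert (HP := PI_RGT_0).
  apply Rmult_lt_0_compat; auto.
  unfold Rdiv. apply Rmult_lt_0_compat.
  apply Rmult_lt_0_compat. apply pow_lt; auto.
  apply Rmult_lt_0_compat; auto. apply Rmult_lt_0_compat. lra. apply Rinv_0_lt_compat, Rmult_lt_0_compat; auto.
  apply Rinv_0_lt_compat, pow_lt; lra.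
Qed.

Theorem mainTheorem6 :
  (forall x : R, 0 <= x ->
     J0 (sqrt 2 * x) - 2 * J0 x + 1 =
     2 / PI * RInt (fun t => (1 - cos (x * cos t)) * (1 - cos (x * sin t))) 0 (PI / 2))
  /\ (forall x : R, 0 <= x -> 0 <= J0 (sqrt 2 * x) - 2 * J0 x + 1)
  /\ (forall r theta2 sigma alpha b kappa eta : R,
        0 < r -> 0 < theta2 -> 0 < sigma ->
        0 < alpha < 2 -> 0 < b < 1 / 2 ->
        0 < g r alpha b kappa eta theta2 sigma).
Proof.
  split; [|split].
  - intros x _. apply part1.
  - intros x _. exact (proj1 (Hf_bounds x)).
  - exact part3.
Qed.
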